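(* Let $(Y,X,A)$ be jointly distributed with $Y,A\in\{0,1\}$, let $R=\mathbb{E}[Y\mid X,A]$ be the Bayes optimal regressor, and let $\ell:\{0,1\}^2\to\mathbb{R}$ be a loss function. Then there exists a predictor derived from $(R,A)$ that satisfies equalized odds and has expected loss $\mathbb{E}\,\ell(\cdot,Y)$ no larger than that of any (possibly randomized) predictor $\widehat{Y}(X,A)\in\{0,1\}$ satisfying equalized odds. The same holds with equalized odds replaced by equal opportunity.
   Context: A predictor $\widehat{Y}\in\{0,1\}$ satisfies equalized odds if $\widehat{Y}$ and $A$ are independent conditional on $Y$, i.e. $\Pr\{\widehat{Y}=1\mid A=0,Y=y\}=\Pr\{\widehat{Y}=1\mid A=1,Y=y\}$ for $y\in\{0,1\}$. It satisfies equal opportunity if $\Pr\{\widehat{Y}=1\mid A=0,Y=1\}=\Pr\{\widehat{Y}=1\mid A=1,Y=1\}$. A predictor is derived from $(R,A)$ if it is a possibly randomized function of $(R,A)$ alone (randomness independent of everything else). *)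

(* Defs.v *)
From HB Require Import structures.
From mathcomp Require Import all_boot all_order all_algebra.
From mathcomp Require Import all_classical all_reals all_analysis.
Set Implicit Arguments. Unset Strict Implicit. Unset Printing Implicit Defensive.
Import Order.TTheory GRing.Theory Num.Theory.
Import numFieldNormedType.Exports.
Local Open Scope classical_set_scope.
Local Open Scope ring_scope.

(* A (possibly randomized) predictor Yhat(X,A) in {0,1} whose randomness is
   independent of everything else is represented by its kernel
     p : TX -> bool -> R,   p x a = Pr{Yhat = 1 | X = x, A = a}.
   Then Pr{Yhat = 1, E} = E[ p(X,A) 1_E ] for every event E determined by
   (X, A, Y). *)

Section Fairness.
Context {R : realType} {dO : measure_display} {Omega : measurableType dO}
  (P : probability Omega R)
  {dX : measure_display} {TX : measurableType dX}
  (X : Omega -> TX) (A Y : Omega -> bool).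

Definition randomized_predictor (p : TX -> bool -> R) : Prop :=
  (forall x a, 0 <= p x a <= 1) /\ (forall a, measurable_fun setT (p ^~ a)).

Definition ev_AY (a y : bool) : set Omega := [set w | A w = a /\ Y w = y].

Definition prob_AY (a y : bool) : R := fine (P (ev_AY a y)).

Definition prob_pos_AY (p : TX -> bool -> R) (a y : bool) : R :=
  Rintegral P (ev_AY a y) (fun w => p (X w) (A w)).

(* Pr{Yhat = 1 | A = a, Y = y}  (ratio; MathComp convention x / 0 = 0) *)
Definition cond_rate (p : TX -> bool -> R) (a y : bool) : R :=
  prob_pos_AY p a y / prob_AY a y.

Definition equalized_odds (p : TX -> bool -> R) : Prop :=
  forall y : bool, cond_rate p false y = cond_rate p true y.

Definition equal_opportunity (p : TX -> bool -> R) : Prop :=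
  cond_rate p false true = cond_rate p true true.

Definition expected_loss (l : bool -> bool -> R) (p : TX -> bool -> R) : R :=
  Rintegral P setT (fun w =>
    p (X w) (A w) * l true (Y w) + (1 - p (X w) (A w)) * l false (Y w)).

(* r(X, A) is (a version of) the conditional expectation E[Y | X, A]:
   r(X,A) is sigma(X,A)-measurable and integrable, and
   E[Y 1_G] = E[r(X,A) 1_G] for every G in sigma(X,A); the sets
   {X in B, A = a} (B measurable) generate sigma(X,A) and every element of
   sigma(X,A) is a finite disjoint union of such sets. *)
Definition bayes_regressor (r : TX -> bool -> R) : Prop :=
  (forall a, measurable_fun setT (r ^~ a)) /\
  P.-integrable setT (fun w => (r (X w) (A w))%:E) /\
  forall (B : set TX) (a : bool), measurable B ->
    Rintegral P (X @^-1` B `&` [set w | A w = a]) (fun w => ((Y w)%:R : R)) =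
    Rintegral P (X @^-1` B `&` [set w | A w = a]) (fun w => r (X w) (A w)).

(* a randomized predictor derived from (R, A): a kernel q(rho, a) =
   Pr{Yhat = 1 | R = rho, A = a}, measurable in rho, with values in [0,1] *)
Definition derived_kernel (q : R -> bool -> R) : Prop :=
  (forall rho a, 0 <= q rho a <= 1) /\ (forall a, measurable_fun setT (q ^~ a)).

Definition derived_predictor (q : R -> bool -> R) (r : TX -> bool -> R) :
  TX -> bool -> R := fun x a => q (r x a) a.

End Fairness.

(* Main.v *)
Require Import Defs.
From HB Require Import structures.
From mathcomp Require Import all_boot all_order all_algebra.
From mathcomp Require Import all_classical all_reals all_analysis.
From mathcomp Require Import ring lra.
Import Order.TTheory GRing.Theory Num.Theory.
Import numFieldNormedType.Exports.
Local Open Scope classical_set_scope.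
Local Open Scope ring_scope.
Section Main.
Local Set Implicit Arguments.
Local Unset Strict Implicit.
Context {R : realType} {dO : measure_display} {Omega : measurableType dO}
  (P : probability Omega R)
  {dX : measure_display} {TX : measurableType dX}
  (X : Omega -> TX) (A Y : Omega -> bool).
Hypothesis mX : measurable_fun setT X.
Hypothesis mA : measurable [set w | A w].
Hypothesis mY : measurable [set w | Y w].

Lemma mboolE (B : Omega -> bool) (mB : measurable [set w | B w]) (b : bool) :
  measurable [set w | B w = b].
Proof.
case: b; first exact: mB.
have -> : [set w | B w = false] = ~` [set w | B w].
  by apply/seteqP; split => w /=; case: (B w).
exact: measurableC.
Qed.

Definition Oa (a : bool) := [set w | A w = a].
Lemma mOa a : measurable (Oa a). Proof. exact: mboolE. Qed.
Lemma mev a y : measurable (ev_AY A Y a y).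
Proof.
have -> : ev_AY A Y a y = Oa a `&` [set w | Y w = y] by [].
by apply: measurableI; [exact: mOa | exact: mboolE].
Qed.

Lemma Pfin (D : set Omega) : measurable D -> (P D < +oo)%E.
Proof. by move=> mD; apply: (le_lt_trans (probability_le1 P mD)); exact: ltey. Qed.

Lemma bounded_of (D : set Omega) (f : Omega -> R) (c : R) :
  (forall w, `|f w| <= c) -> [bounded f x | x in D].
Proof.
move=> hc; exists c; split; first exact: num_real.
by move=> M cM w _; exact: le_trans (hc w) (ltW cM).
Qed.

Lemma int_bnd (D : set Omega) (f : Omega -> R) (c : R) :
  measurable D -> measurable_fun setT f -> (forall w, `|f w| <= c) ->
  P.-integrable D (EFin \o f).
Proof.
move=> mD mf hc; apply: measurable_bounded_integrable => //.
- exact: Pfin.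
- exact: measurable_funS mf.
- exact: bounded_of hc.
Qed.
Definition bmf (g : TX -> R) := measurable_fun setT g /\ exists c, forall x, `|g x| <= c.
Definition f01 (g : TX -> R) := measurable_fun setT g /\ forall x, 0 <= g x <= 1.

Lemma f01_bmf g : f01 g -> bmf g.
Proof.
move=> [mg hg]; split => //; exists 1 => x.
by have /andP[h0 h1] := hg x; rewrite ger0_norm.
Qed.

Lemma bmfD g h : bmf g -> bmf h -> bmf (fun x => g x + h x).
Proof.
move=> [mg [c hc]] [mh [d hd]]; split; first exact: measurable_realfun.measurable_funD.
exists (c + d) => x; apply: le_trans (ler_normD _ _) _; exact: lerD.
Qed.

Lemma bmfZ k g : bmf g -> bmf (fun x => k * g x).
Proof.
move=> [mg [c hc]]; split; first exact: (measurable_realfun.measurable_funM (measurable_cst k) mg).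
exists (`|k| * c) => x; rewrite normrM; exact: ler_wpM2l.
Qed.

Lemma bmfN g : bmf g -> bmf (fun x => - g x).
Proof.
move=> hg; have := bmfZ (-1) hg.
by under [X in bmf X -> _]eq_fun do rewrite mulN1r.
Qed.

Lemma bmfB g h : bmf g -> bmf h -> bmf (fun x => g x - h x).
Proof. by move=> hg hh; apply: bmfD => //; exact: bmfN. Qed.

Lemma bmf_cst k : bmf (fun _ => k).
Proof. by split; [exact: measurable_cst | exists `|k|]. Qed.

Definition J (D : set Omega) (g : TX -> R) := Rintegral P D (fun w => g (X w)).

Lemma mgX g : bmf g -> measurable_fun setT (fun w => g (X w)).
Proof. by move=> [mg _]; exact: measurableT_comp mg mX. Qed.

Lemma int_J D g : measurable D -> bmf g -> P.-integrable D (EFin \o (fun w => g (X w))).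
Proof.
move=> mD hg; have [_ [c hc]] := hg.
by apply: (int_bnd (c:=c)) => //; exact: mgX.
Qed.

Lemma JD D g h : measurable D -> bmf g -> bmf h ->
  J D (fun x => g x + h x) = J D g + J D h.
Proof. by move=> mD hg hh; rewrite /J RintegralD //; exact: int_J. Qed.

Lemma JB D g h : measurable D -> bmf g -> bmf h ->
  J D (fun x => g x - h x) = J D g - J D h.
Proof. by move=> mD hg hh; rewrite /J RintegralB //; exact: int_J. Qed.

Lemma JZ D k g : measurable D -> bmf g -> J D (fun x => k * g x) = k * J D g.
Proof. by move=> mD hg; rewrite /J RintegralZl //; exact: int_J. Qed.

Lemma Jcst D k : measurable D -> J D (fun _ => k) = k * fine (P D).
Proof. by move=> mD; rewrite /J Rintegral_cst. Qed.

Lemma Jle D g h : measurable D -> bmf g -> bmf h -> (forall x, g x <= h x) ->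
  J D g <= J D h.
Proof. by move=> mD hg hh gh; apply: le_Rintegral => //; exact: int_J. Qed.

Lemma Jge0 D g : (forall x, 0 <= g x) -> 0 <= J D g.
Proof. by move=> g0; apply: Rintegral_ge0. Qed.

Lemma Jext D g h : (forall x, g x = h x) -> J D g = J D h.
Proof. by move=> gh; apply: eq_Rintegral => w _; rewrite gh. Qed.
Lemma Oa_split a : Oa a = ev_AY A Y a true `|` ev_AY A Y a false.
Proof.
apply/seteqP; split => w /=; rewrite /Oa /ev_AY /=.
  by move=> ->; case: (Y w); [left|right].
by case=> -[].
Qed.

Lemma ev_disj a : [disjoint ev_AY A Y a true & ev_AY A Y a false].
Proof. by apply/eqP; apply/seteqP; split => w //= -[[_ h1] [_ h2]]; rewrite h1 in h2. Qed.

Lemma J_split a g : bmf g ->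
  J (Oa a) g = J (ev_AY A Y a true) g + J (ev_AY A Y a false) g.
Proof.
move=> hg; rewrite /J Oa_split Rintegral_setU //; try exact: mev.
  by rewrite -Oa_split; apply: int_J => //; exact: mOa.
exact: ev_disj.
Qed.

Lemma J01 D g : measurable D -> f01 g -> 0 <= J D g <= fine (P D).
Proof.
move=> mD hg; apply/andP; split.
  by apply: Jge0 => x; have [_ /(_ x) /andP[]] := hg.
rewrite -[X in _ <= X]mul1r -Jcst //; apply: Jle => //.
- exact: f01_bmf.
- exact: bmf_cst.
- by move=> x; have [_ /(_ x) /andP[]] := hg.
Qed.

Lemma Jabs D g c : measurable D -> bmf g -> (forall x, `|g x| <= c) ->
  `|J D g| <= c.
Proof.
move=> mD hg hc.
have c0 : 0 <= c by apply: le_trans (hc (X point)) ; exact: normr_ge0.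
apply: le_trans (le_normr_Rintegral mD (int_J mD hg)) _.
apply: (@le_trans _ _ (Rintegral P D (fun _ => c))).
  apply: le_Rintegral => //.
  - apply: (int_J (g := fun x => `|g x|)) => //; have [mg _] := hg; split.
      exact: measurableT_comp mg.
    by exists c => x; rewrite normr_id.
  - by apply: (int_J (g := fun _ => c)) => //; exact: bmf_cst.
rewrite Rintegral_cst // -[X in _ <= X]mulr1 ler_wpM2l //.
rewrite -lee_fin fineK ?probability_le1 //.
by rewrite ge0_fin_numE ?Pfin.
Qed.
Variable r : TX -> bool -> R.
Hypothesis hr : bayes_regressor P X A Y r.

Lemma int_r a : P.-integrable (Oa a) (EFin \o (fun w => r (X w) a)).
Proof.
have [_ [hi _]] := hr.
have hi' : P.-integrable (Oa a) (fun w => (r (X w) (A w))%:E).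
  by apply: integrableS hi => //; exact: mOa.
apply: (eq_integrable (mOa a) (fun w => (r (X w) (A w))%:E)); last exact: hi'.
by move=> w /set_mem /= ->.
Qed.

Lemma int_gr a g : bmf g ->
  P.-integrable (Oa a) (EFin \o (fun w => g (X w) * r (X w) a)).
Proof.
move=> hg; have [_ [c hc]] := hg.
have := integrableMr (mOa a) (h := fun w => g (X w))
  (measurable_funS measurableT (subsetT _) (mgX hg)) (bounded_of _ (fun w => hc (X w))) (int_r a).
apply: (eq_integrable (mOa a)) => w _ /=.
by rewrite EFinM.
Qed.

Definition K a g := Rintegral P (Oa a) (fun w => g (X w) * r (X w) a).

Lemma KD a g h : bmf g -> bmf h -> K a (fun x => g x + h x) = K a g + K a h.
Proof.
move=> hg hh; rewrite /K -RintegralD; try exact: int_gr; last exact: mOa.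
by apply: eq_Rintegral => w _; rewrite mulrDl.
Qed.

Lemma KB a g h : bmf g -> bmf h -> K a (fun x => g x - h x) = K a g - K a h.
Proof.
move=> hg hh; rewrite /K -RintegralB; try exact: int_gr; last exact: mOa.
by apply: eq_Rintegral => w _; rewrite mulrBl.
Qed.

Lemma KZ a k g : bmf g -> K a (fun x => k * g x) = k * K a g.
Proof.
move=> hg; rewrite /K -RintegralZl; try exact: int_gr; last exact: mOa.
by apply: eq_Rintegral => w _; rewrite mulrA.
Qed.

Lemma Kext a g h : (forall x, g x = h x) -> K a g = K a h.
Proof. by move=> gh; apply: eq_Rintegral => w _; rewrite gh. Qed.

Definition Cr a := Rintegral P (Oa a) (fun w => `|r (X w) a|).

Lemma Kabs a g c : bmf g -> (forall x, `|g x| <= c) -> `|K a g| <= c * Cr a.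
Proof.
move=> hg hc.
apply: le_trans (le_normr_Rintegral (mOa a) (int_gr a hg)) _.
rewrite /Cr -RintegralZl; first last.
- exact: (integrable_norm (int_r a)).
- exact: mOa.
apply: le_Rintegral.
- exact: mOa.
- exact: (integrable_norm (int_gr a hg)).
- apply: (eq_integrable (mOa a) (EFin \o (fun w => c * `|r (X w) a|))) => //.
  have := integrableZl (mOa a) c (integrable_norm (int_r a)).
  by apply: (eq_integrable (mOa a)) => w _ /=; rewrite EFinM.
- by move=> w _; rewrite normrM ler_wpM2r.
Qed.
Lemma mem_bset (T : Type) (f : T -> bool) w : (w \in [set w | f w]) = f w.
Proof. by apply/idP/idP => [/set_mem|/mem_set]. Qed.

Lemma Kind a (B : set TX) : measurable B -> K a (\1_B) = J (ev_AY A Y a true) (\1_B).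
Proof.
move=> mB; have [_ [_ hb]] := hr.
have e1 : K a \1_B = Rintegral P (X @^-1` B `&` [set w | A w = a]) (fun w => r (X w) (A w)).
  rewrite Rintegral_mkcondl patch_indic /K; apply: eq_Rintegral => w /set_mem /= ->.
  by rewrite mulrC.
rewrite e1 -hb // Rintegral_mkcondl patch_indic.
have -> : ev_AY A Y a true = Oa a `&` [set w | Y w] by [].
rewrite /J Rintegral_mkcondr patch_indic; apply: eq_Rintegral => w _ /=.
rewrite (indicE _ [set w0 | Y w0]) mem_bset mulrC.
change (\1_(X @^-1` B) w) with (\1_B (X w) : R).
by case: (Y w); rewrite ?mul1r ?mul0r ?mulr0.
Qed.
Definition cnt (k : nat) (z : R) : R := \sum_(j < k) (((j.+1)%:R <= z)%R)%:R.

Lemma cnt_full k z : k%:R <= z -> cnt k z = k%:R.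
Proof.
move=> hz; rewrite /cnt (eq_bigr (fun _ => 1)); first by rewrite sumr_const card_ord.
by move=> j _; rewrite (le_trans _ hz) // ler_nat ltn_ord.
Qed.

Lemma cnt_bnd k z : 0 <= z <= k%:R -> cnt k z <= z <= cnt k z + 1.
Proof.
elim: k z => [|k IH] z /andP[z0 zk].
  by rewrite /cnt big_ord0; apply/andP; split; lra.
rewrite /cnt big_ord_recr /= -/(cnt k z).
have [hz|hz] := lerP z k%:R.
  have -> : ((k.+1)%:R <= z) = false.
    by apply/negbTE; rewrite -ltNge (le_lt_trans hz) // ltr_nat.
  by rewrite addr0; apply: IH; rewrite z0 hz.
rewrite cnt_full ?(ltW hz) //.
move: zk; rewrite -natr1 => zk.
by case: (leP (k%:R + 1) z) => h /=; apply/andP; split; lra.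
Qed.

Definition stset (g : TX -> R) (k j : nat) := [set x | (j.+1)%:R <= k%:R * g x].

Lemma m_stset g k j : bmf g -> measurable (stset g k j).
Proof.
move=> hg; have := bmfZ k%:R hg => -[mh _].
have -> : stset g k j = (fun x => k%:R * g x) @^-1` `[(j.+1)%:R, +oo[%classic.
  by apply/seteqP; split => x; rewrite /= in_itv /= andbT.
by rewrite -[X in measurable X]setTI; apply: mh => //; exact: measurable_itv.
Qed.

Lemma bmf_indic (B : set TX) : measurable B -> bmf (\1_B : TX -> R).
Proof.
move=> mB; split; first exact: measurable_realfun.measurable_indic.
by exists 1 => x; rewrite indicE; case: (_ \in _); rewrite ?normr1 ?normr0.
Qed.

Definition st g k x : R := \sum_(j < k) ((k%:R : R)^-1 * \1_(stset g k j) x).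

Lemma stE g k x : st g k x = k%:R^-1 * cnt k (k%:R * g x).
Proof.
rewrite /st /cnt mulr_sumr; apply: eq_bigr => j _.
by rewrite indicE mem_bset.
Qed.

Lemma K0 a : K a (fun _ => 0) = 0.
Proof.
rewrite /K; under eq_Rintegral do rewrite mul0r.
by rewrite Rintegral_cst ?mul0r //; exact: mOa.
Qed.

Lemma J0 D : measurable D -> J D (fun _ => 0) = 0.
Proof. by move=> mD; rewrite Jcst // mul0r. Qed.

Lemma sum_good a (n : nat) (F : nat -> TX -> R) :
  (forall j, bmf (F j) /\ K a (F j) = J (ev_AY A Y a true) (F j)) ->
  bmf (fun x => \sum_(j < n) F j x) /\
  K a (fun x => \sum_(j < n) F j x) = J (ev_AY A Y a true) (fun x => \sum_(j < n) F j x).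
Proof.
move=> hF; elim: n => [|n [IHb IHe]].
  have -> : (fun x => \sum_(j < 0) F j x) = (fun _ => 0).
    by apply/funext => x; rewrite big_ord0.
  by split; [exact: bmf_cst | rewrite K0 J0 //; exact: mev].
have -> : (fun x => \sum_(j < n.+1) F j x) = (fun x => \sum_(j < n) F j x + F n x).
  by apply/funext => x; rewrite big_ord_recr.
have [hb he] := hF n.
split; first exact: bmfD.
by rewrite KD // JD //; [rewrite IHe he | exact: mev].
Qed.

Lemma st_good a g k : bmf g ->
  bmf (st g k) /\ K a (st g k) = J (ev_AY A Y a true) (st g k).
Proof.
move=> hg.
have := @sum_good a k (fun j x => k%:R^-1 * \1_(stset g k j) x).
move=> /(_ _) [].
  move=> j; have hb := bmf_indic (m_stset k j hg); split; first exact: bmfZ.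
  rewrite KZ // JZ //; last exact: mev.
  by rewrite Kind //; exact: m_stset.
by move=> h1 h2; split.
Qed.

Lemma st_bnd g k x : (0 < k)%N -> 0 <= g x <= 1 -> `|g x - st g k x| <= k%:R^-1.
Proof.
move=> k0 /andP[g0 g1]; rewrite stE.
have kp : 0 < k%:R :> R by rewrite ltr0n.
have := @cnt_bnd k (k%:R * g x).
rewrite mulr_ge0 ?ler0n //= ler_piMr // => /(_ isT) /andP[c1 c2].
set c := cnt k _ in c1 c2 *.
have e : g x = k%:R^-1 * (k%:R * g x) by rewrite mulrA mulVf ?mul1r // gt_eqF.
rewrite [in X in `|X - _|]e -mulrBr normrM ger0_norm ?invr_ge0 ?ler0n //.
rewrite -[X in _ <= X]mulr1 ler_wpM2l ?invr_ge0 ?ler0n //.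
rewrite ger0_norm; lra.
Qed.
Lemma Cr_ge0 a : 0 <= Cr a.
Proof. by apply: Rintegral_ge0 => w _; exact: normr_ge0. Qed.

Lemma KJ a g : f01 g -> K a g = J (ev_AY A Y a true) g.
Proof.
move=> hg; have hgb := f01_bmf hg.
pose E := K a g - J (ev_AY A Y a true) g.
have hE : forall k, (0 < k)%N -> `|E| <= k%:R^-1 * (Cr a + 1).
  move=> k k0; have [sb se] := st_good a k hgb.
  have db := bmfB hgb sb.
  have eE : E = K a (fun x => g x - st g k x) -
      J (ev_AY A Y a true) (fun x => g x - st g k x).
    rewrite KB // JB //; last exact: mev.
    by rewrite se /E; lra.
  rewrite eE; apply: le_trans (ler_normB _ _) _.
  rewrite mulrDr mulr1; apply: lerD.
  - apply: Kabs db _ => x; apply: st_bnd k0 _; by have [_ /(_ x)] := hg.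
  - apply: Jabs db _; first exact: mev.
    by move=> x; apply: st_bnd k0 _; have [_ /(_ x)] := hg.
have E0 : `|E| <= 0.
  apply/ler_addgt0Pr => e e0; rewrite add0r.
  have C0 : 0 < Cr a + 1 by have := Cr_ge0 a; lra.
  pose k := (Num.trunc ((Cr a + 1) / e)).+1.
  have hk := truncnS_gt ((Cr a + 1) / e).
  apply: le_trans (hE k isT) _.
  have kp : 0 < k%:R :> R by rewrite ltr0n.
  rewrite mulrC ler_pdivrMr // ; move: hk; rewrite ltr_pdivrMr // => hk.
  by rewrite mulrC; apply: ltW.
by apply/eqP; rewrite -subr_eq0 -normr_le0.
Qed.
Lemma cvge_le (u : nat -> \bar R) (l c : \bar R) : u n @[n --> \oo] --> l ->
  (forall k, (u k <= c)%E) -> (l <= c)%E.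
Proof.
move=> ul uc; rewrite -(cvg_lim (@ereal_hausdorff R) ul).
by apply: lime_le; [exact: cvgP ul | exact: nearW].
Qed.

Lemma cvge_ge (u : nat -> \bar R) (l c : \bar R) : u n @[n --> \oo] --> l ->
  (forall k, (c <= u k)%E) -> (c <= l)%E.
Proof.
move=> ul uc; rewrite -(cvg_lim (@ereal_hausdorff R) ul).
by apply: lime_ge; [exact: cvgP ul | exact: nearW].
Qed.

Definition rho a w := r (X w) a.
Lemma mrho a : measurable_fun setT (rho a).
Proof. by have [h _] := hr; exact: measurableT_comp (h a) mX. Qed.

Definition Ge a t := Oa a `&` [set w | t <= rho a w].
Definition Gt a t := Oa a `&` [set w | t < rho a w].

Lemma mGe a t : measurable (Ge a t).
Proof.
apply: measurableI; first exact: mOa.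
have -> : [set w | t <= rho a w] = rho a @^-1` `[t, +oo[%classic.
  by apply/seteqP; split => x; rewrite /= in_itv /= andbT.
by rewrite -[X in measurable X]setTI; apply: mrho => //; exact: measurable_itv.
Qed.

Lemma mGt a t : measurable (Gt a t).
Proof.
apply: measurableI; first exact: mOa.
have -> : [set w | t < rho a w] = rho a @^-1` `]t, +oo[%classic.
  by apply/seteqP; split => x; rewrite /= in_itv /= andbT.
by rewrite -[X in measurable X]setTI; apply: mrho => //; exact: measurable_itv.
Qed.

Lemma Ge_mono a s t : s <= t -> Ge a t `<=` Ge a s.
Proof. by move=> st w [h1 h2]; split => //; exact: le_trans st h2. Qed.

Lemma PGe_mono a s t : s <= t -> (P (Ge a t) <= P (Ge a s))%E.
Proof. by move=> st; apply: le_measure; rewrite ?inE; [exact: mGe|exact: mGe|exact: Ge_mono]. Qed.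

Lemma L1 a : P (Ge a (- (k%:R))) @[k --> \oo] --> P (Oa a).
Proof.
have -> : Oa a = \bigcup_k Ge a (- (k%:R)).
  apply/seteqP; split => w; last by move=> [k _ []].
  move=> hw; exists (Num.bound `|rho a w|) => //; split => //.
  have h1 := archi_boundP (normr_ge0 (rho a w)).
  have h2 := ler_norm (- rho a w); rewrite normrN in h2.
  rewrite /=; lra.
apply: nondecreasing_cvg_mu; first by move=> k; exact: mGe.
  by apply: bigcup_measurable => k _; exact: mGe.
by move=> k m km; apply/subsetPset; apply: Ge_mono; rewrite lerN2 ler_nat.
Qed.

Lemma L2 a : P (Ge a (k%:R)) @[k --> \oo] --> 0%E.
Proof.
have <- : P set0 = 0%E by rewrite measure0.
have -> : set0 = \bigcap_k Ge a (k%:R).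
  apply/seteqP; split => w // hw.
  have [_ h] := hw (Num.bound `|rho a w|) I.
  have h1 := archi_boundP (normr_ge0 (rho a w)).
  have h2 := ler_norm (rho a w).
  exfalso; move: h; rewrite /=; lra.
apply: nonincreasing_cvg_mu; first exact: Pfin (mGe _ _).
- by move=> k; exact: mGe.
- by apply: bigcapT_measurable => k; exact: mGe.
by move=> k m km; apply/subsetPset; apply: Ge_mono; rewrite ler_nat.
Qed.

Lemma inv_small (e : R) : 0 < e -> exists k : nat, (k.+1%:R)^-1 < e.
Proof.
move=> e0; exists (Num.trunc e^-1).
have h := truncnS_gt (e^-1).
rewrite -[X in _ < X]invrK ltf_pV2 ?posrE ?ltr0n ?invr_gt0 //.
Qed.

Lemma L3 a t : P (Ge a (t - (k.+1%:R)^-1)) @[k --> \oo] --> P (Ge a t).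
Proof.
have -> : Ge a t = \bigcap_k Ge a (t - (k.+1%:R)^-1).
  apply/seteqP; split => w.
    move=> hw k _; apply: Ge_mono hw; rewrite lerBlDr lerDl invr_ge0 ler0n //.
  move=> hw; have [hO _] := hw 0%N I; split => //=.
  rewrite leNgt; apply/negP => ht.
  have := ht; rewrite -subr_gt0 => /inv_small [k hk].
  have [_ /= h] := hw k I.
  move: hk; rewrite ltNge => /negP; apply; rewrite lerBlDr addrC -lerBlDr; exact: h.
apply: nonincreasing_cvg_mu; first exact: Pfin (mGe _ _).
- by move=> k; exact: mGe.
- by apply: bigcapT_measurable => k; exact: mGe.
move=> k m km; apply/subsetPset; apply: Ge_mono; rewrite lerD2l lerN2 lef_pV2 ?posrE ?ltr0n //.
by rewrite ler_nat.
Qed.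
Lemma L4 a t : P (Ge a (t + (k.+1%:R)^-1)) @[k --> \oo] --> P (Gt a t).
Proof.
have -> : Gt a t = \bigcup_k Ge a (t + (k.+1%:R)^-1).
  apply/seteqP; split => w.
    move=> [hO /= ht]; have := ht; rewrite -subr_gt0 => /inv_small [k hk].
    exists k => //; split => //=.
    by rewrite -lerBrDl; apply: ltW.
  move=> [k _ [hO /= h]]; split => //=.
  apply: lt_le_trans h; rewrite ltrDl invr_gt0 ltr0n //.
apply: nondecreasing_cvg_mu; first by move=> k; exact: mGe.
  by apply: bigcup_measurable => k _; exact: mGe.
move=> k m km; apply/subsetPset; apply: Ge_mono; rewrite lerD2l lef_pV2 ?posrE ?ltr0n //.
by rewrite ler_nat.
Qed.

Lemma quantile a n : (0 < n)%R -> (n%:E < P (Oa a))%E ->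
  exists t, (P (Gt a t) <= n%:E)%E /\ (n%:E <= P (Ge a t))%E.
Proof.
move=> n0 nM.
pose S := [set s | (n%:E <= P (Ge a s))%E].
have [s0 Ss0] : exists s, S s.
  apply: contrapT => /forallNP hS.
  have : (P (Oa a) <= n%:E)%E.
    apply: (@cvge_le (fun k : nat => P (Ge a (- k%:R))) _ _ (@L1 a)) => k; apply/ltW; rewrite ltNge; apply/negP => h.
    exact: (hS (- k%:R)).
  by rewrite leNgt nM.
have [K hK] : exists K : nat, (P (Ge a K%:R) < n%:E)%E.
  apply: contrapT => /forallNP hS.
  have : (n%:E <= 0)%E.
    apply: (@cvge_ge (fun k : nat => P (Ge a k%:R)) _ _ (@L2 a)) => k; rewrite leNgt; apply/negP => h.
    exact: (hS k).
  by rewrite lee_fin leNgt n0.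
have ubS : ubound S K%:R.
  move=> s Ss; rewrite leNgt; apply/negP => Ks.
  have := PGe_mono a (ltW Ks); rewrite leNgt => /negP; apply.
  exact: lt_le_trans hK Ss.
have hsup : has_sup S by split; [exists s0 | exists K%:R].
pose t := sup S.
exists t; split.
  apply: (@cvge_le (fun k : nat => P (Ge a (t + (k.+1%:R)^-1))) _ _ (@L4 a t)) => k; apply/ltW; rewrite ltNge; apply/negP => h.
  have := sup_upper_bound hsup h; rewrite -/t.
  by rewrite leNgt ltrDl invr_gt0 ltr0n.
apply: (@cvge_ge (fun k : nat => P (Ge a (t - (k.+1%:R)^-1))) _ _ (@L3 a t)) => k.
have e0 : 0 < (k.+1%:R : R)^-1 by rewrite invr_gt0 ltr0n.
have [e Se he] := sup_adherent e0 hsup.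
apply: le_trans Se _; apply: PGe_mono; exact: ltW.
Qed.
Definition dk (phi : R -> R) := measurable_fun setT phi /\ forall z, 0 <= phi z <= 1.

Lemma mra a : measurable_fun setT (fun x => r x a).
Proof. by have [h _] := hr; exact: h. Qed.

Lemma dk_f01 a phi : dk phi -> f01 (fun x => phi (r x a)).
Proof. by move=> [m h]; split => //; exact: measurableT_comp m (mra a). Qed.

Lemma J_indic D (B : set TX) : measurable D -> measurable B ->
  J D \1_B = fine (P (X @^-1` B `&` D)).
Proof.
move=> mD mB; rewrite /J /Rintegral; congr fine.
rewrite -integral_indic //.
by rewrite -[X in measurable X]setTI; exact: mX.
Qed.

Definition thr (t g : R) (z : R) : R := (1 - g) * ((t < z)%R)%:R + g * ((t <= z)%R)%:R.

Lemma mem_oy (t z : R) : (z \in `]t, +oo[%classic) = (t < z).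
Proof.
apply/idP/idP => [/set_mem|h]; first by rewrite /= in_itv /= andbT.
by apply/mem_set; rewrite /= in_itv /= andbT.
Qed.

Lemma mem_cy (t z : R) : (z \in `[t, +oo[%classic) = (t <= z).
Proof.
apply/idP/idP => [/set_mem|h]; first by rewrite /= in_itv /= andbT.
by apply/mem_set; rewrite /= in_itv /= andbT.
Qed.

Lemma thr_dk t g : 0 <= g <= 1 -> dk (thr t g).
Proof.
move=> /andP[g0 g1]; split.
  have e1 : (fun z => ((t < z)%R)%:R : R) = \1_(`]t, +oo[%classic).
    by apply/funext => z; rewrite indicE mem_oy.
  have e2 : (fun z => ((t <= z)%R)%:R : R) = \1_(`[t, +oo[%classic).
    by apply/funext => z; rewrite indicE mem_cy.
  apply: measurable_realfun.measurable_funD.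
    apply: measurable_realfun.measurable_funM; first exact: measurable_cst.
    by rewrite e1; apply: measurable_realfun.measurable_indic; exact: measurable_itv.
  apply: measurable_realfun.measurable_funM; first exact: measurable_cst.
  by rewrite e2; apply: measurable_realfun.measurable_indic; exact: measurable_itv.
move=> z; rewrite /thr.
have hb : forall b1 b2 : bool, 0 <= (1 - g) * b1%:R + g * b2%:R <= 1.
  by case; case; rewrite /= ?mulr0 ?mulr1 ?addr0 ?add0r; apply/andP; split; lra.
exact: hb.
Qed.

Lemma J_thr a t g : J (Oa a) (fun x => thr t g (r x a)) =
  (1 - g) * fine (P (Gt a t)) + g * fine (P (Ge a t)).
Proof.
have m1 : measurable [set x | t < r x a].
  have -> : [set x | t < r x a] = (fun x => r x a) @^-1` `]t, +oo[%classic.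
    by apply/seteqP; split => x; rewrite /= in_itv /= andbT.
  by rewrite -[X in measurable X]setTI; apply: mra => //; exact: measurable_itv.
have m2 : measurable [set x | t <= r x a].
  have -> : [set x | t <= r x a] = (fun x => r x a) @^-1` `[t, +oo[%classic.
    by apply/seteqP; split => x; rewrite /= in_itv /= andbT.
  by rewrite -[X in measurable X]setTI; apply: mra => //; exact: measurable_itv.
have e1 : forall x, ((t < r x a)%R)%:R = \1_[set x | t < r x a] x :> R.
  by move=> x; rewrite indicE mem_bset.
have e2 : forall x, ((t <= r x a)%R)%:R = \1_[set x | t <= r x a] x :> R.
  by move=> x; rewrite indicE mem_bset.
rewrite /thr (Jext _ (h := fun x => (1 - g) * \1_[set x | t < r x a] x + g * \1_[set x | t <= r x a] x)); last first.
  by move=> x; rewrite e1 e2.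
rewrite JD; first last.
- by apply: bmfZ; exact: bmf_indic.
- by apply: bmfZ; exact: bmf_indic.
- exact: mOa.
rewrite !JZ; try exact: mOa; try exact: bmf_indic.
rewrite !J_indic //; try exact: mOa.
by rewrite /Gt /Ge !(setIC _ (Oa a)).
Qed.
Definition M a := fine (P (Oa a)).

Lemma PfinE (D : set Omega) : measurable D -> P D = (fine (P D))%:E.
Proof. by move=> mD; rewrite fineK // ge0_fin_numE // Pfin. Qed.

Lemma thr_sign t g (v z : R) : 0 <= g <= 1 -> 0 <= v <= 1 ->
  0 <= (thr t g z - v) * (z - t).
Proof.
move=> /andP[g0 g1] /andP[v0 v1]; rewrite /thr.
case: (ltgtP t z) => h.
- rewrite /= !mulr1; apply: mulr_ge0; [lra | rewrite subr_ge0 ltW //].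
- rewrite /= !mulr0 addr0 sub0r mulNr -mulrN; apply: mulr_ge0 => //; lra.
- by rewrite h subrr mulr0.
Qed.

Lemma NP a n : 0 <= n <= M a -> exists phi, dk phi /\
  J (Oa a) (fun x => phi (r x a)) = n /\
  forall g, f01 g -> J (Oa a) g = n ->
    J (ev_AY A Y a true) g <= J (ev_AY A Y a true) (fun x => phi (r x a)).
Proof.
move=> /andP[n0 nM].
have mO := mOa a; have mE1 := mev a true; have mE0 := mev a false.
have [n00|n0'] := eqVneq n 0.
  exists (fun _ => 0); split.
    by split; [exact: measurable_cst | move=> z; rewrite lexx ler01].
  split; first by rewrite J0 // n00.
  move=> g hg hJ; rewrite J0 //.
  have := J_split a (f01_bmf hg); rewrite hJ n00 => e.
  have := J01 mE0 hg => /andP[h _]; lra.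
have [nMe|nM'] := eqVneq n (M a).
  exists (fun _ => 1); split.
    by split; [exact: measurable_cst | move=> z; rewrite ler01 lexx].
  split; first by rewrite Jcst // mul1r nMe.
  move=> g hg hJ; apply: Jle => //; first exact: f01_bmf.
  - exact: bmf_cst.
  - by move=> x; have [_ /(_ x) /andP[]] := hg.
have n0s : 0 < n by rewrite lt_def n0' n0.
have nMs : n < M a by rewrite lt_def eq_sym nM' nM.
have nME : (n%:E < P (Oa a))%E by rewrite PfinE // lte_fin.
have [t [h1 h2]] := quantile n0s nME.
move: h1 h2; rewrite (PfinE (mGt a t)) (PfinE (mGe a t)) !lee_fin.
set H := fine (P (Gt a t)); set G := fine (P (Ge a t)) => hH hG.
pose gm := if H < G then (n - H) / (G - H) else 0.
have [gm01 gmE] : 0 <= gm <= 1 /\ (1 - gm) * H + gm * G = n.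
  rewrite /gm; case: ifPn => hHG.
    have GH : 0 < G - H by rewrite subr_gt0.
    split; last by field; rewrite subr_eq0 gt_eqF.
    apply/andP; split; first by apply: divr_ge0; lra.
    by rewrite ler_pdivrMr // mul1r; lra.
  split; first by rewrite lexx ler01.
  by rewrite -leNgt in hHG; rewrite subr0 mul1r mul0r addr0; lra.
exists (thr t gm); split; first exact: thr_dk.
split; first by rewrite J_thr.
move=> g hg hJ.
have hphi := dk_f01 a (thr_dk t gm01).
rewrite -!KJ //.
have hd := bmfB (f01_bmf hphi) (f01_bmf hg).
rewrite -subr_ge0 -KB //; try exact: f01_bmf.
have eJ : J (Oa a) (fun x => t * (thr t gm (r x a) - g x)) = 0.
  rewrite JZ // JB //; try exact: f01_bmf.
  by rewrite J_thr gmE hJ subrr mulr0.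
set d := (fun x => thr t gm (r x a) - g x) in hd eJ *.
have -> : K a d = K a d - J (Oa a) (fun x => t * d x) by rewrite eJ subr0.
rewrite /K /J -RintegralB //; first last.
- by apply: (int_J (g := fun x => t * d x)) => //; exact: bmfZ.
- exact: int_gr.
apply: Rintegral_ge0 => w _.
rewrite [t * _]mulrC -mulrBr /d.
apply: thr_sign => //.
by have [_ /(_ (X w))] := hg.
Qed.
Lemma mfun_bool (B : Omega -> bool) : measurable [set w | B w] -> measurable_fun setT B.
Proof.
move=> mB; apply: (measurable_fun_bool true).
by rewrite setTI; have -> : B @^-1` [set true] = [set w | B w] by apply/seteqP; split => w /=.
Qed.

Lemma mpXA (p : TX -> bool -> R) : (forall a, bmf (fun x => p x a)) ->
  measurable_fun setT (fun w => p (X w) (A w)).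
Proof.
move=> hp.
have -> : (fun w => p (X w) (A w)) = (fun w => if A w then p (X w) true else p (X w) false).
  by apply/funext => w; case: (A w).
apply: measurable_fun_ifT; first exact: mfun_bool.
- exact: (mgX (hp true)).
- exact: (mgX (hp false)).
Qed.

Lemma mlY (f : bool -> R) : measurable_fun setT (fun w => f (Y w)).
Proof.
have -> : (fun w => f (Y w)) = (fun w => if Y w then f true else f false).
  by apply/funext => w; case: (Y w).
by apply: measurable_fun_ifT; [exact: mfun_bool | exact: measurable_cst | exact: measurable_cst].
Qed.

Lemma setT_split : [set: Omega] = (ev_AY A Y true true `|` ev_AY A Y true false) `|`
  (ev_AY A Y false true `|` ev_AY A Y false false).
Proof.
rewrite -!Oa_split; apply/seteqP; split => w // _.
by rewrite /Oa /=; case: (A w); [left|right].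
Qed.

Lemma Oa_disj : [disjoint Oa true & Oa false].
Proof. by apply/eqP; apply/seteqP; split => w //=; rewrite /Oa /= => -[-> h]. Qed.

Lemma split4 (f : Omega -> R) c : measurable_fun setT f -> (forall w, `|f w| <= c) ->
  Rintegral P setT f = (Rintegral P (ev_AY A Y true true) f + Rintegral P (ev_AY A Y true false) f) +
    (Rintegral P (ev_AY A Y false true) f + Rintegral P (ev_AY A Y false false) f).
Proof.
move=> mf hc.
have hi : forall D, measurable D -> P.-integrable D (EFin \o f).
  by move=> D mD; exact: (int_bnd mD mf hc).
rewrite setT_split -!Oa_split Rintegral_setU; try exact: mOa; last exact: Oa_disj.
  rewrite !Oa_split !Rintegral_setU //; try exact: mev; try exact: ev_disj.
  - by rewrite -Oa_split; apply: hi; exact: mOa.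
  - by rewrite -Oa_split; apply: hi; exact: mOa.
by apply: hi; apply: measurableU; exact: mOa.
Qed.
Definition xJ (p : TX -> bool -> R) a y := J (ev_AY A Y a y) (fun x => p x a).

Lemma pp_J p a y : prob_pos_AY P X A Y p a y = xJ p a y.
Proof. by apply: eq_Rintegral => w /set_mem [/= -> _]. Qed.

Lemma bnd_l (l : bool -> bool -> R) b w :
  `|l b (Y w)| <= `|l b true| + `|l b false|.
Proof. by case: (Y w); rewrite ?lerDl ?lerDr. Qed.

Lemma loss_dec (l : bool -> bool -> R) p : (forall a, bmf (fun x => p x a)) ->
  expected_loss P X A Y l p =
  Rintegral P setT (fun w => l false (Y w)) +
  (l true true - l false true) * (xJ p true true + xJ p false true) +
  (l true false - l false false) * (xJ p true false + xJ p false false).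
Proof.
move=> hp.
have [_ [c1 hc1]] := hp true; have [_ [c0 hc0]] := hp false.
have hc : forall w, `|p (X w) (A w)| <= c1 + c0.
  move=> w; have h1 := hc1 (X w); have h0 := hc0 (X w).
  have n1 := normr_ge0 (p (X w) true); have n0 := normr_ge0 (p (X w) false).
  by case: (A w); lra.
pose L1 := `|l true true| + `|l true false|.
pose L0 := `|l false true| + `|l false false|.
have mF : measurable_fun setT (fun w => p (X w) (A w) * l true (Y w) +
    (1 - p (X w) (A w)) * l false (Y w)).
  apply: measurable_realfun.measurable_funD; apply: measurable_realfun.measurable_funM.
  - exact: mpXA.
  - exact: mlY.
  - apply: measurable_realfun.measurable_funD; first exact: measurable_cst.
    have -> : (fun x => - p (X x) (A x)) = (fun x => (fun _ => -1) x * p (X x) (A x)).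
      by apply/funext => x; rewrite mulN1r.
    exact: (measurable_realfun.measurable_funM (measurable_cst (-1 : R)) (mpXA hp)).
  - exact: mlY.
rewrite /expected_loss (split4 mF (c := (c1 + c0) * L1 + (1 + (c1 + c0)) * L0)); last first.
  move=> w; apply: le_trans (ler_normD _ _) _; rewrite !normrM.
  apply: lerD; apply: ler_pM => //;
    first [exact: bnd_l | exact: hc |
      (apply: le_trans (ler_normB _ _) _; rewrite normr1; apply: lerD => //)].
rewrite (split4 (mlY (l false)) (c := L0)); last by move=> w; exact: bnd_l.
have e : forall a y, Rintegral P (ev_AY A Y a y) (fun w => p (X w) (A w) * l true (Y w) +
    (1 - p (X w) (A w)) * l false (Y w)) =
    l false y * fine (P (ev_AY A Y a y)) + (l true y - l false y) * xJ p a y.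
  move=> a y.
  rewrite (_ : Rintegral P (ev_AY A Y a y) _ = J (ev_AY A Y a y)
      (fun x => l false y + (l true y - l false y) * p x a)); last first.
    by apply: eq_Rintegral => w /set_mem [/= -> ->]; ring.
  rewrite JD; first last.
  - exact: bmfZ.
  - exact: bmf_cst.
  - exact: mev.
  by rewrite Jcst ?JZ //; try exact: mev.
have e' : forall a y, Rintegral P (ev_AY A Y a y) (fun w => l false (Y w)) =
    l false y * fine (P (ev_AY A Y a y)).
  move=> a y; rewrite (_ : Rintegral P (ev_AY A Y a y) _ = J (ev_AY A Y a y)
      (fun _ => l false y)); last first.
    by apply: eq_Rintegral => w /set_mem [/= _ ->].
  by rewrite Jcst //; exact: mev.
rewrite !e !e'; ring.
Qed.
Definition pi a y := fine (P (ev_AY A Y a y)).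

Lemma M_split a : M a = pi a true + pi a false.
Proof.
have := J_split a (bmf_cst 1).
by rewrite !Jcst ?mul1r //; try exact: mev; exact: mOa.
Qed.

Lemma pi_ge0 a y : 0 <= pi a y.
Proof. exact: fine_ge0 (measure_ge0 _ _). Qed.

Lemma M_ge0 a : 0 <= M a.
Proof. exact: fine_ge0 (measure_ge0 _ _). Qed.

Lemma J1 D : measurable D -> J D (fun _ => 1) = fine (P D).
Proof. by move=> mD; rewrite Jcst // mul1r. Qed.

Definition NPspec a (Phi : R -> R -> R) := forall n, 0 <= n <= M a ->
  dk (Phi n) /\ J (Oa a) (fun x => Phi n (r x a)) = n /\
  forall g, f01 g -> J (Oa a) g = n ->
    J (ev_AY A Y a true) g <= J (ev_AY A Y a true) (fun x => Phi n (r x a)).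

Lemma NPex a : exists Phi, NPspec a Phi.
Proof.
have h : forall n, exists phi : R -> R, 0 <= n <= M a ->
  dk phi /\ J (Oa a) (fun x => phi (r x a)) = n /\
  forall g, f01 g -> J (Oa a) g = n ->
    J (ev_AY A Y a true) g <= J (ev_AY A Y a true) (fun x => phi (r x a)).
  move=> n; have [hn|hn] := pselect (0 <= n <= M a).
    by have [phi hphi] := NP hn; exists phi.
  by exists (fun _ => 0).
have [Phi hPhi] := choice h.
by exists Phi.
Qed.

Definition clamp a (n : R) := if n < 0 then 0 else if M a < n then M a else n.

Lemma clamp_id a n : 0 <= n <= M a -> clamp a n = n.
Proof.
move=> /andP[h0 h1]; rewrite /clamp ltNge h0 /=.
by rewrite ltNge h1.
Qed.

Lemma clamp_rng a n : 0 <= clamp a n <= M a.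
Proof.
have := M_ge0 a; rewrite /clamp => hM.
case: ifPn => h1; first by rewrite lexx.
case: ifPn => h2; first by rewrite hM lexx.
by rewrite -leNgt in h1; rewrite -leNgt in h2; rewrite h1 h2.
Qed.

Lemma clamp_lip a n m : `|clamp a n - clamp a m| <= `|n - m|.
Proof.
have := M_ge0 a; rewrite /clamp => hM.
have h5 := ler_norm (n - m).
have h6 : - (n - m) <= `|n - m| by rewrite -normrN; exact: ler_norm.
rewrite ler_norml.
by case: (ltrP n 0) => h1; case: (ltrP (M a) n) => h2; case: (ltrP m 0) => h3;
  case: (ltrP (M a) m) => h4; apply/andP; split; lra.
Qed.
Definition Uf a (Phi : R -> R -> R) n :=
  J (ev_AY A Y a true) (fun x => Phi (clamp a n) (r x a)).

Lemma J_Oa_rng a g : f01 g -> 0 <= J (Oa a) g <= M a.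
Proof. by move=> hg; apply: J01 => //; exact: mOa. Qed.

Lemma Jev1_le a g : f01 g -> J (ev_AY A Y a true) g <= J (Oa a) g.
Proof.
move=> hg; rewrite (J_split a (f01_bmf hg)).
have := J01 (mev a false) hg => /andP[h _]; lra.
Qed.

Lemma f01_1m g : f01 g -> f01 (fun x => 1 - g x).
Proof.
move=> [mg hg]; split.
  have := bmfB (bmf_cst 1) (f01_bmf (conj mg hg)); by case.
by move=> x; have /andP[h0 h1] := hg x; apply/andP; split; lra.
Qed.

Section U.
Variables (a : bool) (Phi : R -> R -> R).
Hypothesis hP : NPspec a Phi.

Lemma Phi_f01 n : f01 (fun x => Phi (clamp a n) (r x a)).
Proof. by apply: dk_f01; have [h _] := hP (clamp_rng a n). Qed.

Lemma JO_Phi n : 0 <= n <= M a -> J (Oa a) (fun x => Phi n (r x a)) = n.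
Proof. by move=> hn; have [_ [h _]] := hP hn. Qed.

Lemma U_ub g : f01 g -> J (ev_AY A Y a true) g <= Uf a Phi (J (Oa a) g).
Proof.
move=> hg; have hn := J_Oa_rng a hg.
rewrite /Uf clamp_id //; have [_ [_ h]] := hP hn; exact: h.
Qed.

Lemma U_rng n : 0 <= Uf a Phi n <= pi a true.
Proof. by apply: J01; [exact: mev | exact: Phi_f01]. Qed.

Lemma U_le n : 0 <= n <= M a -> Uf a Phi n <= n.
Proof.
move=> hn; have := Jev1_le a (Phi_f01 n).
by rewrite /Uf clamp_id // JO_Phi.
Qed.

Lemma U_lb g : f01 g -> pi a true - Uf a Phi (M a - J (Oa a) g) <= J (ev_AY A Y a true) g.
Proof.
move=> hg; have := U_ub (f01_1m hg).
rewrite !JB; try exact: f01_bmf; try exact: bmf_cst; try exact: mOa; try exact: mev.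
by rewrite !J1; try exact: mOa; try exact: mev; rewrite /M /pi; lra.
Qed.

Lemma U_mono n m : 0 <= n -> n <= m -> m <= M a -> Uf a Phi n <= Uf a Phi m.
Proof.
move=> n0 nm mM.
have [nM|nM] := eqVneq n (M a).
  by have -> : m = n by apply/eqP; rewrite eq_le nm andbT nM mM.
have nMs : n < M a by rewrite lt_def eq_sym nM (le_trans nm mM).
have hn : 0 <= n <= M a by rewrite n0 (le_trans nm mM).
pose c := (m - n) / (M a - n).
have c01 : 0 <= c <= 1.
  apply/andP; split; first by apply: divr_ge0; lra.
  by rewrite ler_pdivrMr ?subr_gt0 // mul1r; lra.
have hphi := Phi_f01 n; rewrite /= clamp_id // in hphi.
pose g := fun x => Phi n (r x a) + c * (1 - Phi n (r x a)).
have hg : f01 g.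
  split.
    by have [] := bmfD (f01_bmf hphi) (bmfZ c (f01_bmf (f01_1m hphi))).
  move=> x; have [_ /(_ x) /andP[h0 h1]] := hphi.
  move: c01 => /andP[c0 c1]; rewrite /g; apply/andP; split; first nra.
  nra.
have eg : J (Oa a) g = m.
  rewrite /g JD; try exact: mOa; try exact: f01_bmf; last exact: (bmfZ c (f01_bmf (f01_1m hphi))).
  rewrite JZ; try exact: mOa; try exact: (f01_bmf (f01_1m hphi)).
  rewrite JB; try exact: mOa; try exact: bmf_cst; try exact: (f01_bmf hphi).
  rewrite J1; last exact: mOa.
  rewrite JO_Phi // -/(M a) /c; field; lra.
have := U_ub hg; rewrite eg; apply: le_trans.
rewrite /g JD; try exact: mev; try exact: f01_bmf; last exact: (bmfZ c (f01_bmf (f01_1m hphi))).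
rewrite JZ; try exact: mev; try exact: (f01_bmf (f01_1m hphi)).
rewrite JB; try exact: mev; try exact: bmf_cst; try exact: (f01_bmf hphi).
rewrite J1; last exact: mev.
have := U_rng n; rewrite /Uf clamp_id // => /andP[u0 u1].
rewrite -/(pi a true); move: c01 => /andP[c0 c1]; nra.
Qed.

Lemma U_lip n m : 0 <= n -> n <= m -> m <= M a -> Uf a Phi m - Uf a Phi n <= m - n.
Proof.
move=> n0 nm mM.
have [m0|m0] := eqVneq m 0.
  have n00 : n = 0 by apply/eqP; rewrite eq_le n0 -m0 nm.
  by rewrite m0 n00 !subrr.
have m0s : 0 < m by rewrite lt_def m0 (le_trans n0 nm).
have hm : 0 <= m <= M a by rewrite mM (le_trans n0 nm).
have hn : 0 <= n <= M a by rewrite n0 (le_trans nm mM).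
have hphi := Phi_f01 m; rewrite /= clamp_id // in hphi.
pose c := n / m.
have c01 : 0 <= c <= 1.
  apply/andP; split; first by apply: divr_ge0; lra.
  by rewrite ler_pdivrMr // mul1r.
have hg : f01 (fun x => c * Phi m (r x a)).
  split; first by have [] := bmfZ c (f01_bmf hphi).
  move=> x; have [_ /(_ x) /andP[h0 h1]] := hphi.
  move: c01 => /andP[c0 c1]; apply/andP; split; nra.
have eg : J (Oa a) (fun x => c * Phi m (r x a)) = n.
  rewrite JZ; [|exact: mOa|exact: f01_bmf].
  by rewrite JO_Phi // /c divfK // gt_eqF.
have := U_ub hg; rewrite eg JZ; [|exact: mev|exact: f01_bmf].
have := U_le hm; rewrite /Uf !clamp_id // => hUm hc.
have e : m - n = m * (1 - c) by rewrite /c mulrBr mulr1 mulrC divfK // gt_eqF.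
rewrite e; move: c01 => /andP[c0 c1].
set u := J _ (fun x => Phi m (r x a)) in hUm hc *.
nra.
Qed.

Lemma U_clamp n : Uf a Phi (clamp a n) = Uf a Phi n.
Proof. by rewrite /Uf (clamp_id (clamp_rng a n)). Qed.

Lemma U_lipR n m : `|Uf a Phi n - Uf a Phi m| <= `|n - m|.
Proof.
rewrite -U_clamp -(U_clamp m).
apply: le_trans (clamp_lip a n m).
have /andP[h1 h2] := clamp_rng a n; have /andP[h3 h4] := clamp_rng a m.
set n' := clamp a n in h1 h2 *; set m' := clamp a m in h3 h4 *.
have hnm := ler_norm (n' - m').
have hnm' : - (n' - m') <= `|n' - m'| by rewrite -normrN; exact: ler_norm.
rewrite ler_norml.
case: (lerP n' m') => h.
  have := U_lip h1 h h4; have := U_mono h1 h h4.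
  by move=> a1 a2; apply/andP; split; lra.
have h' := ltW h.
have := U_lip h3 h' h2; have := U_mono h3 h' h2.
by move=> a1 a2; apply/andP; split; lra.
Qed.

End U.
Lemma Jcomb D (f g : TX -> R) (c : R) : measurable D -> bmf f -> bmf g ->
  J D (fun x => c * f x + (1 - c) * (1 - g x)) = c * J D f + (1 - c) * (fine (P D) - J D g).
Proof.
move=> mD hf hg.
have h1 := bmfB (bmf_cst 1) hg.
rewrite JD //; [|exact: bmfZ|exact: bmfZ].
by rewrite !JZ // JB ?J1 //; exact: bmf_cst.
Qed.

Lemma realize a Phi (hP : NPspec a Phi) n T : 0 <= n <= M a ->
  pi a true - Uf a Phi (M a - n) <= T <= Uf a Phi n ->
  exists psi, dk psi /\ J (Oa a) (fun x => psi (r x a)) = n /\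
    J (ev_AY A Y a true) (fun x => psi (r x a)) = T.
Proof.
move=> hn /andP[hT1 hT2].
have hn' : 0 <= M a - n <= M a by move: hn => /andP[? ?]; apply/andP; split; lra.
have [dk1 [J1n _]] := hP n hn.
have [dk2 [J2n _]] := hP (M a - n) hn'.
rewrite /Uf !clamp_id // in hT1 hT2.
set Up := J _ (fun x => Phi n (r x a)) in hT2.
set Lo := pi a true - J _ (fun x => Phi (M a - n) (r x a)) in hT1.
pose lam := if Lo < Up then (T - Lo) / (Up - Lo) else 0.
have [l01 lE] : 0 <= lam <= 1 /\ lam * Up + (1 - lam) * Lo = T.
  rewrite /lam; case: ifPn => h.
    have UL : 0 < Up - Lo by rewrite subr_gt0.
    split; last by field; rewrite subr_eq0 gt_eqF.
    apply/andP; split; first by apply: divr_ge0; lra.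
    by rewrite ler_pdivrMr // mul1r; lra.
  by rewrite -leNgt in h; split; [rewrite lexx ler01 | lra].
have b1 := f01_bmf (dk_f01 a dk1); have b2 := f01_bmf (dk_f01 a dk2).
exists (fun z => lam * Phi n z + (1 - lam) * (1 - Phi (M a - n) z)); split.
  split.
    have [m1 _] := dk1; have [m2 _] := dk2.
    apply: measurable_realfun.measurable_funD.
      exact: (measurable_realfun.measurable_funM (measurable_cst lam) m1).
    apply: (measurable_realfun.measurable_funM (measurable_cst (1 - lam))).
    apply: measurable_realfun.measurable_funD; first exact: measurable_cst.
    have -> : (fun x => - Phi (M a - n) x) = (fun x => (fun _ => -1) x * Phi (M a - n) x).
      by apply/funext => x; rewrite mulN1r.
    exact: (measurable_realfun.measurable_funM (measurable_cst (-1 : R)) m2).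
  move=> z; have [_ /(_ z) /andP[u0 u1]] := dk1; have [_ /(_ z) /andP[v0 v1]] := dk2.
  move: l01 => /andP[l0 l1]; apply/andP; split; nra.
split.
  rewrite (Jcomb lam (f := fun x => Phi n (r x a)) (g := fun x => Phi (M a - n) (r x a))) //;
    last exact: mOa.
  by rewrite J1n J2n -/(M a); ring.
rewrite (Jcomb lam (f := fun x => Phi n (r x a)) (g := fun x => Phi (M a - n) (r x a))) //;
  last exact: mev.
Qed.
Lemma cont_fst (T U : topologicalType) : continuous (@fst T U).
Proof. by move=> x; exact: cvg_fst. Qed.

Lemma cont_snd (T U : topologicalType) : continuous (@snd T U).
Proof. by move=> x; exact: cvg_snd. Qed.

Lemma cont_lip (f : R -> R) : (forall x y, `|f x - f y| <= `|x - y|) -> continuous f.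
Proof.
move=> hf x; apply/cvgrPdist_lt => e e0.
near=> y.
apply: le_lt_trans (hf x y) _.
near: y; apply/nbhs_ballP; by exists e => // z /=.
Unshelve. all: by end_near. Qed.
Section Cont.
Variable T : topologicalType.
Implicit Types f g : T -> R.

Lemma contD f g : continuous f -> continuous g -> continuous (fun x => f x + g x).
Proof. by move=> cf cg x; apply: cvgD; [exact: cf | exact: cg]. Qed.

Lemma contB f g : continuous f -> continuous g -> continuous (fun x => f x - g x).
Proof. by move=> cf cg x; apply: cvgB; [exact: cf | exact: cg]. Qed.

Lemma contZ c f : continuous f -> continuous (fun x => c * f x).
Proof. by move=> cf x; apply: cvgMr; exact: cf. Qed.

Lemma contC (c : R) : continuous (fun _ : T => c).
Proof. by move=> x; exact: cvg_cst. Qed.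

Lemma contO (h : R -> R) f : continuous h -> continuous f -> continuous (fun x => h (f x)).
Proof. by move=> ch cf x; apply: continuous_comp; [exact: cf | exact: ch]. Qed.

Lemma closed_fle f g : continuous f -> continuous g -> closed [set x | f x <= g x].
Proof.
move=> cf cg.
have -> : [set x | f x <= g x] = (fun x => g x - f x) @^-1` [set y | 0 <= y].
  by apply/seteqP; split => x /=; rewrite subr_ge0.
apply: preimage_closed; last exact: closed_ge.
by move=> x _; apply: contB.
Qed.

Lemma closed_feq f g : continuous f -> continuous g -> closed [set x | f x = g x].
Proof.
move=> cf cg.
have -> : [set x | f x = g x] = (fun x => g x - f x) @^-1` [set y | y = 0].
  apply/seteqP; split => x /=; first by move=> ->; rewrite subrr.
  by move/eqP; rewrite subr_eq0 => /eqP ->.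
apply: preimage_closed; last exact: closed_eq.
by move=> x _; apply: contB.
Qed.

End Cont.
Definition V := ((R * R) * (R * R))%type.
Definition nc a (v : V) := if a then v.1.1 else v.2.1.
Definition tc a (v : V) := if a then v.1.2 else v.2.2.

Lemma cont_nc a : continuous (nc a).
Proof.
by case: a => v; apply: continuous_comp; [exact: cont_fst | exact: cont_fst |
  exact: cont_snd | exact: cont_fst].
Qed.

Lemma cont_tc a : continuous (tc a).
Proof.
by case: a => v; apply: continuous_comp; [exact: cont_fst | exact: cont_snd |
  exact: cont_snd | exact: cont_snd].
Qed.

Definition Cons a (U : R -> R) := [set v : V | pi a true - U (M a - nc a v) <= tc a v]
  `&` [set v : V | tc a v <= U (nc a v)].

Definition Box : set V := (`[0, M true] `*` `[0, pi true true]) `*`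
  (`[0, M false] `*` `[0, pi false true]).

Lemma Box_mem (v : V) : Box v <-> forall a, 0 <= nc a v <= M a /\ 0 <= tc a v <= pi a true.
Proof.
rewrite /Box /nc /tc; case: v => [[n1 t1] [n0 t0]] /=; split.
  by rewrite !in_itv /= => -[[h1 h2] [h3 h4]] [].
by move=> h; have [h1 h2] := h true; have [h3 h4] := h false; rewrite !in_itv /=.
Qed.

Lemma closed_Cons a (U : R -> R) : continuous U -> closed (Cons a U).
Proof.
move=> cU; apply: closedI.
  apply: closed_fle; last exact: cont_tc.
  apply: contB; first exact: contC.
  apply: contO => //; apply: contB; [exact: contC | exact: cont_nc].
apply: closed_fle; first exact: cont_tc.
by apply: contO => //; exact: cont_nc.
Qed.

Definition Kset (U : bool -> R -> R) (E : set V) := Box `&` (Cons true (U true) `&` Cons false (U false) `&` E).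

Lemma f01_cst1 : f01 (fun _ => 1).
Proof. by split; [exact: measurable_cst | move=> x; rewrite lexx ler01]. Qed.

Lemma opt_exists (Phi : bool -> R -> R -> R) (hP : forall a, NPspec a (Phi a))
    (E : set V) (obj : V -> R) :
  closed E -> continuous obj -> E ((0, 0), (0, 0)) ->
  exists2 v, Kset (fun a => Uf a (Phi a)) E v &
    forall w, Kset (fun a => Uf a (Phi a)) E w -> obj v <= obj w.
Proof.
move=> cE cobj E0.
have cU : forall a, continuous (Uf a (Phi a)) by move=> a; apply: cont_lip; exact: U_lipR.
have ne : Kset (fun a => Uf a (Phi a)) E !=set0.
  exists ((0, 0), (0, 0)); split.
    by apply/Box_mem => a; rewrite /nc /tc; case: a => /=; rewrite lexx ?M_ge0 ?pi_ge0.
  have h : forall a, Cons a (Uf a (Phi a)) ((0, 0), (0, 0)).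
    move=> a; split; rewrite /nc /tc /=; last first.
      by have /andP[h0 _] := U_rng (hP a) 0; case: a h0.
    have h1 := U_ub (hP a) f01_cst1.
    rewrite !J1 in h1; try exact: mev; try exact: mOa.
    by case: a h1; rewrite /= subr0 -/(M _) -/(pi _ _) subr_le0.
  by split; [split; exact: h|].
have cK : compact (Kset (fun a => Uf a (Phi a)) E).
  apply: compact_closedI.
    by apply: compact_setX; apply: compact_setX; exact: segment_compact.
  apply: closedI => //; apply: closedI; exact: closed_Cons.
have [c cin hmin] := compact_EVT_min ne cK (continuous_subspaceT cobj).
exists c; first exact: set_mem cin.
by move=> w hw; apply: hmin; exact: mem_set.
Qed.
Lemma rp_f01 p : randomized_predictor p -> forall a, f01 (fun x => p x a).
Proof. by move=> [h1 h2] a; split; [exact: h2 | move=> x; exact: h1]. Qed.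

Definition vp (p : TX -> bool -> R) : V :=
  ((J (Oa true) (fun x => p x true), J (ev_AY A Y true true) (fun x => p x true)),
   (J (Oa false) (fun x => p x false), J (ev_AY A Y false true) (fun x => p x false))).

Lemma nc_vp p a : nc a (vp p) = J (Oa a) (fun x => p x a).
Proof. by case: a. Qed.

Lemma tc_vp p a : tc a (vp p) = J (ev_AY A Y a true) (fun x => p x a).
Proof. by case: a. Qed.

Definition rate a y (v : V) := (pi a y)^-1 * (if y then tc a v else nc a v - tc a v).

Lemma cond_rateE p a y : (forall a, bmf (fun x => p x a)) ->
  cond_rate P X A Y p a y = rate a y (vp p).
Proof.
move=> hp; rewrite /cond_rate pp_J /rate /xJ mulrC /prob_AY -/(pi a y).
congr (_ * _); case: y; first by rewrite tc_vp.
by rewrite nc_vp tc_vp (J_split a (hp a)) addrC addKr.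
Qed.

Lemma cont_rate a y : continuous (rate a y).
Proof.
apply: contZ; case: y; first exact: cont_tc.
by apply: contB; [exact: cont_nc | exact: cont_tc].
Qed.

Definition obj (l : bool -> bool -> R) (v : V) :=
  (l true true - l false true) * (tc true v + tc false v) +
  (l true false - l false false) * ((nc true v - tc true v) + (nc false v - tc false v)).

Lemma cont_obj l : continuous (obj l).
Proof.
apply: contD; apply: contZ.
  by apply: contD; exact: cont_tc.
by apply: contD; apply: contB; (exact: cont_nc || exact: cont_tc).
Qed.

Lemma loss_obj l p : (forall a, bmf (fun x => p x a)) ->
  expected_loss P X A Y l p = Rintegral P setT (fun w => l false (Y w)) + obj l (vp p).
Proof.
move=> hp; rewrite loss_dec // /obj /xJ !tc_vp !nc_vp.
rewrite !(J_split _ (hp _)); ring.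
Qed.

Lemma vp_K (Phi : bool -> R -> R -> R) (hP : forall a, NPspec a (Phi a)) E p :
  randomized_predictor p -> E (vp p) -> Kset (fun a => Uf a (Phi a)) E (vp p).
Proof.
move=> hp hE; have hf := rp_f01 hp; split.
  apply/Box_mem => a; rewrite nc_vp tc_vp; split; first exact: J_Oa_rng.
  by apply: J01; [exact: mev | exact: hf].
have h : forall a, Cons a (Uf a (Phi a)) (vp p).
  move=> a; split; rewrite /= nc_vp tc_vp; first exact: U_lb.
  exact: U_ub.
by split; [split; exact: h|].
Qed.
Lemma main_gen (l : bool -> bool -> R) (E : set V) (Fair : (TX -> bool -> R) -> Prop) :
  closed E -> E ((0, 0), (0, 0)) ->
  (forall p, (forall a, bmf (fun x => p x a)) -> Fair p <-> E (vp p)) ->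
  exists q : R -> bool -> R,
     derived_kernel q /\ Fair (derived_predictor q r) /\
     forall p : TX -> bool -> R, randomized_predictor p -> Fair p ->
       expected_loss P X A Y l (derived_predictor q r) <= expected_loss P X A Y l p.
Proof.
move=> cE E0 hFair.
have [P1 hP1] := NPex true; have [P0 hP0] := NPex false.
pose Phi := fun a : bool => if a then P1 else P0.
have hP : forall a, NPspec a (Phi a) by case.
have [v hv hmin] := opt_exists hP cE (@cont_obj l) E0.
have hv' := hv; move: hv' => [/Box_mem hB [[hCT hCF] hE]].
have hreal : forall a, Cons a (Uf a (Phi a)) v -> exists psi, dk psi /\
    J (Oa a) (fun x => psi (r x a)) = nc a v /\
    J (ev_AY A Y a true) (fun x => psi (r x a)) = tc a v.
  move=> a [h1 h2]; apply: realize; first exact: hP.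
    by have [] := hB a.
  by rewrite h1 h2.
have [psT [dT [eT1 eT2]]] := hreal true hCT.
have [psF [dF [eF1 eF2]]] := hreal false hCF.
pose q := fun (z : R) (a : bool) => if a then psT z else psF z.
have dq : forall a, dk (q ^~ a) by case.
have hdp : forall a, bmf (fun x => derived_predictor q r x a).
  by move=> a; apply: f01_bmf; apply: (dk_f01 a (dq a)).
have vpq : vp (derived_predictor q r) = v.
  move: eT1 eT2 eF1 eF2; rewrite /vp /derived_predictor /q /nc /tc /=.
  by case: v {hv hmin hB hCT hCF hE hreal} => [[? ?] [? ?]] /= -> -> -> ->.
exists q; split.
  split; first by move=> z a; have [_ h] := dq a; exact: h.
  by move=> a; have [h _] := dq a; exact: h.
split; first by apply/(hFair _ hdp); rewrite vpq.
move=> p hp hF.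
have hpb : forall a, bmf (fun x => p x a) by move=> a; apply: f01_bmf; exact: rp_f01.
rewrite !loss_obj // vpq lerD2l; apply: hmin.
by apply: vp_K => //; apply/(hFair _ hpb).
Qed.

Definition E_eo : set V := [set v | rate false true v = rate true true v] `&`
  [set v | rate false false v = rate true false v].
Definition E_op : set V := [set v | rate false true v = rate true true v].

Lemma rate0 a y : rate a y ((0, 0), (0, 0)) = 0.
Proof. by rewrite /rate /nc /tc; case: a; case: y; rewrite /= ?subrr mulr0. Qed.

Lemma main_sec (l : bool -> bool -> R) :
  (exists q : R -> bool -> R,
     derived_kernel q /\
     equalized_odds P X A Y (derived_predictor q r) /\
     forall p : TX -> bool -> R, randomized_predictor p ->
       equalized_odds P X A Y p ->
       expected_loss P X A Y l (derived_predictor q r) <= expected_loss P X A Y l p)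
  /\
  (exists q : R -> bool -> R,
     derived_kernel q /\
     equal_opportunity P X A Y (derived_predictor q r) /\
     forall p : TX -> bool -> R, randomized_predictor p ->
       equal_opportunity P X A Y p ->
       expected_loss P X A Y l (derived_predictor q r) <= expected_loss P X A Y l p).
Proof.
split.
  apply: (@main_gen l E_eo).
  - by apply: closedI; apply: closed_feq; exact: cont_rate.
  - by split; rewrite /= !rate0.
  move=> p hp; rewrite /equalized_odds /E_eo; split.
    by move=> h; split; rewrite /= -!cond_rateE.
  by move=> [h1 h2] [|]; rewrite !cond_rateE.
apply: (@main_gen l E_op).
- by apply: closed_feq; exact: cont_rate.
- by rewrite /E_op /= !rate0.
move=> p hp; rewrite /equal_opportunity /E_op /= !cond_rateE //.
Qed.

End Main.

Theorem corollary5p3 (R : realType) (dO : measure_display)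
  (Omega : measurableType dO) (P : probability Omega R)
  (dX : measure_display) (TX : measurableType dX)
  (X : Omega -> TX) (A Y : Omega -> bool)
  (mX : measurable_fun setT X)
  (mA : measurable [set w | A w]) (mY : measurable [set w | Y w])
  (r : TX -> bool -> R) (hr : bayes_regressor P X A Y r)
  (l : bool -> bool -> R) :
  (exists q : R -> bool -> R,
     derived_kernel q /\
     equalized_odds P X A Y (derived_predictor q r) /\
     forall p : TX -> bool -> R, randomized_predictor p ->
       equalized_odds P X A Y p ->
       expected_loss P X A Y l (derived_predictor q r) <= expected_loss P X A Y l p)
  /\
  (exists q : R -> bool -> R,
     derived_kernel q /\
     equal_opportunity P X A Y (derived_predictor q r) /\
     forall p : TX -> bool -> R, randomized_predictor p ->
       equal_opportunity P X A Y p ->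
       expected_loss P X A Y l (derived_predictor q r) <= expected_loss P X A Y l p).
Proof.
exact: (main_sec mX mA mY hr l).
Qed.
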